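(* Let $p$ be a binary word of length $l$ with exactly $2$ runs. For every $n\ge l$, every $p$-optimal binary word of length $n$ has exactly $2$ runs.
   Context: $c_p(w)$ is the number of occurrences of $p$ as a (not necessarily consecutive) subsequence of $w$. $M_{n,p}=\max\{c_p(w): w\in\{0,1\}^n\}$; a binary word $w$ of length $n$ is $p$-optimal if $c_p(w)=M_{n,p}$. A run is a maximal block of consecutive equal letters. *)

(* Defs.v *)
From mathcomp Require Import all_boot.
Set Implicit Arguments. Unset Strict Implicit. Unset Printing Implicit Defensive.

(* Binary words are sequences of booleans (false = 0, true = 1). *)

(* c_p(w): number of occurrences of p as a (not necessarily consecutive)
   subsequence of w, i.e. number of index subsets of positions of w
   (encoded as selection masks m of length |w|) whose selected letters,
   read in order, spell p. *)
Definition occ (p w : seq bool) : nat :=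
  #|[set m : (size w).-tuple bool | mask m w == p]|.

Definition Mnp (n : nat) (p : seq bool) : nat :=
  \max_(w : n.-tuple bool) occ p w.

Definition p_optimal (p w : seq bool) : Prop := occ p w = Mnp (size w) p.

Definition runs (w : seq bool) : nat :=
  match w with
  | [::] => 0
  | x :: s => (count (fun b => b) (pairmap (fun a b => a != b) x s)).+1
  end.

(* Main.v *)
Require Import Defs.
From mathcomp Require Import all_boot zify.
Set Implicit Arguments. Unset Strict Implicit.

Fixpoint f (p w : seq bool) : nat :=
  match w with
  | [::] => (p == [::])
  | x :: w' => f p w' + (match p with [::] => 0 | y :: p' => (x == y) * f p' w' end)
  end.

Lemma f_nil w : f [::] w = 1.
Proof. by elim: w => //= x w ->; rewrite addn0. Qed.

Lemma f_ones d b w : f (nseq b d) w = 'C(count_mem d w, b).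
Proof.
elim: w b => [|x w IH] [|b] //=.
  by rewrite f_nil bin0.
rewrite -[d :: nseq b d]/(nseq b.+1 d) !IH.
by case: (x == d); rewrite ?mul1n ?add1n ?binS ?mul0n ?addn0 ?add0n.
Qed.

Lemma neqc (x c : bool) : x != c -> x = ~~ c.
Proof. by case: x; case: c. Qed.

Lemma f_bound c a b w :
  f (nseq a c ++ nseq b (~~c)) w <= 'C(count_mem c w, a) * 'C(count_mem (~~c) w, b).
Proof.
elim: w a => [|x w IH] [|a].
- by rewrite cat0s f_ones bin0 mul1n.
- by [].
- by rewrite cat0s f_ones bin0 mul1n.
rewrite -[f _ (x :: w)]/(f (nseq a.+1 c ++ nseq b (~~c)) w + (x == c) * f (nseq a c ++ nseq b (~~c)) w).
rewrite /=.
case: (eqVneq x c) => [->|/neqc ->].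
  rewrite (_ : (c == ~~c) = false); last by case: (c).
  rewrite /= mul1n add1n add0n binS mulnDl leq_add //.
  exact: (IH a.+1).
rewrite eqxx /= mul0n addn0 add0n add1n.
apply: leq_trans (IH a.+1) _.
by rewrite leq_mul // leq_bin2l.
Qed.

Lemma cnt_c (c : bool) z o : count_mem c (nseq z c ++ nseq o (~~c)) = z.
Proof. by rewrite count_cat !count_nseq /= eqxx; case: c; rewrite /= mul1n mul0n addn0. Qed.

Lemma cnt_d (c : bool) z o : count_mem (~~c) (nseq z c ++ nseq o (~~c)) = o.
Proof. by rewrite count_cat !count_nseq /= eqxx; case: c; rewrite /= mul1n mul0n add0n. Qed.

Lemma f_sorted c a b z o :
  f (nseq a c ++ nseq b (~~c)) (nseq z c ++ nseq o (~~c)) = 'C(z, a) * 'C(o, b).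
Proof.
elim: z a => [|z IH] [|a].
- by rewrite cat0s f_ones cnt_d bin0 mul1n.
- apply/eqP; rewrite eqn_leq leq0n andbT.
  by have := f_bound c a.+1 b (nseq 0 c ++ nseq o (~~c)); rewrite cnt_c.
- by rewrite cat0s f_ones cnt_d bin0 mul1n.
rewrite -[f _ (nseq z.+1 c ++ _)]/(f (nseq a.+1 c ++ nseq b (~~c)) (nseq z c ++ nseq o (~~c)) + (c == c) * f (nseq a c ++ nseq b (~~c)) (nseq z c ++ nseq o (~~c))).
by rewrite !IH eqxx mul1n binS mulnDl.
Qed.

Lemma no_c (c : bool) w : count_mem c w = 0 -> w = nseq (count_mem (~~c) w) (~~c).
Proof.
elim: w => [|x w IH] //=.
case: (eqVneq x c) => [->|/neqc ->] //=.
by rewrite eqxx add0n => /IH E; rewrite {1}E.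
Qed.

Lemma sum_eq a1 b1 a2 b2 : a1 <= b1 -> a2 <= b2 -> a1 + a2 = b1 + b2 -> a1 = b1 /\ a2 = b2.
Proof. lia. Qed.

Lemma f_eq c a b w : 0 < a -> 0 < b -> a <= count_mem c w -> b <= count_mem (~~c) w ->
  f (nseq a c ++ nseq b (~~c)) w = 'C(count_mem c w, a) * 'C(count_mem (~~c) w, b) ->
  w = nseq (count_mem c w) c ++ nseq (count_mem (~~c) w) (~~c).
Proof.
elim: w a => [|x w IH] [|a] //= _ hb hza hzb.
case: (eqVneq x c) hza hzb => [->|/neqc ->] /=.
  rewrite (_ : (c == ~~c) = false); last by case: (c).
  rewrite /= mul1n add1n add0n binS mulnDl => hza hzb E.
  have B1 : f (c :: nseq a c ++ nseq b (~~ c)) w <= _ := f_bound c a.+1 b w.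
  have B2 := f_bound c a b w.
  have [E1 E2] := sum_eq B1 B2 E.
  rewrite add0n; case: (leqP a.+1 (count_mem c w)) => ha.
    by rewrite [w in LHS](IH a.+1).
  have hca : count_mem c w = a by apply/eqP; rewrite eqn_leq -ltnS ha -ltnS hza.
  case: a IH hza E hca ha E1 E2 B1 B2 => [|a] IH hza E hca ha E1 E2 B1 B2.
    by rewrite hca /= [w in LHS](no_c hca).
  by rewrite [w in LHS](IH a.+1) // hca.
rewrite eqxx /= mul0n addn0 add0n add1n => hza hzb E.
have B1 : f (c :: nseq a c ++ nseq b (~~ c)) w <= _ := f_bound c a.+1 b w.
have P1 : 0 < 'C(count_mem c w, a.+1) by rewrite bin_gt0.
case: b hb IH hzb E B1 => // b _ IH hzb E B1.
have P2 : 0 < 'C(count_mem (~~c) w, b) by rewrite bin_gt0 -ltnS.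
move: B1; rewrite E leq_pmul2l // => H; exfalso; move: H; apply/negP; rewrite -ltnNge.
by rewrite binS -[X in X < _]addn0 ltn_add2l.
Qed.
Lemma card_sum k (P : k.-tuple bool -> bool) :
  #|[set m : k.-tuple bool | P m]| = \sum_(m : k.-tuple bool) (P m : nat).
Proof.
rewrite -sum1_card big_mkcond /=; apply: eq_bigr => m _; rewrite inE; by case: (P m).
Qed.

Lemma sum_tupleS k (F : k.+1.-tuple bool -> nat) :
  \sum_(m : k.+1.-tuple bool) F m =
  \sum_(b : bool) \sum_(m : k.-tuple bool) F [tuple of b :: m].
Proof.
rewrite pair_big /=.
rewrite (reindex (fun bt : bool * k.-tuple bool => [tuple of bt.1 :: bt.2])) /=.
  by [].
exists (fun m => (thead m, [tuple of behead m])).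
  by move=> [b t] _ /=; rewrite theadE; congr pair; apply: val_inj.
by move=> m _ /=; rewrite [in RHS](tuple_eta m).
Qed.

Lemma occE p w : occ p w = f p w.
Proof.
rewrite /occ card_sum.
elim: w p => [|x w IH] p /=.
  rewrite (eq_bigr (fun _ => nat_of_bool (p == [::]))); last first.
    by move=> m _; rewrite (size0nil (size_tuple m)) /= eq_sym.
  by rewrite sum_nat_const card_tuple expn0 mul1n.
rewrite (@sum_tupleS (size w) (fun m => nat_of_bool (mask m (x::w) == p))) big_bool /= addnC -IH.
congr (_ + _).
case: p => [|y p'].
  by rewrite big1.
case: (eqVneq x y) => [->|nxy] /=.
  rewrite mul1n -IH; apply: eq_bigr => m _; by rewrite eqseq_cons eqxx.
rewrite mul0n big1 // => m _; by rewrite eqseq_cons (negbTE nxy).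
Qed.
Lemma cnt0 (s : seq bool) (x : bool) : count (fun b => b) (pairmap (fun a b => a != b) x s) = 0 -> s = nseq (size s) x.
Proof.
elim: s x => [|y s IH] x //=.
case: (eqVneq x y) => [<-|] //= /IH E.
by rewrite {1}E.
Qed.

Lemma cnt1 (s : seq bool) (x : bool) : count (fun b => b) (pairmap (fun a b => a != b) x s) = 1 ->
  exists a b, [/\ 0 < a, 0 < b & x :: s = nseq a x ++ nseq b (~~x)].
Proof.
elim: s x => [|y s IH] x //=.
case: (eqVneq x y) => [<-|nxy] /=.
  move=> /IH [a [b [ha hb E]]]; exists a.+1, b; split => //.
  by rewrite E.
move=> [] /cnt0 E; exists 1, (size s).+1; split => //.
have Ey : y = ~~ x by move: nxy; case: (x); case: (y).
by rewrite /= {1}E Ey.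
Qed.

Lemma cnt_same o (x : bool) : count (fun b => b) (pairmap (fun a b => a != b) x (nseq o x)) = 0.
Proof. by elim: o => //= o ->; rewrite eqxx. Qed.

Lemma cnt_sorted (c : bool) z o :
  count (fun b => b) (pairmap (fun a b => a != b) c (nseq z c ++ nseq o.+1 (~~c))) = 1.
Proof.
elim: z => [|z IH] /=; last by rewrite eqxx.
by rewrite cnt_same; case: (c).
Qed.

Lemma runs_sorted (c : bool) z o : 0 < z -> 0 < o -> runs (nseq z c ++ nseq o (~~c)) = 2.
Proof.
case: z => // z _; case: o => // o _.
by rewrite /runs /= cnt_sorted.
Qed.

Lemma runs2 p : runs p = 2 -> exists c a b, [/\ 0 < a, 0 < b & p = nseq a c ++ nseq b (~~c)].
Proof.
case: p => // x s /= [] /cnt1 [a [b [ha hb E]]].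
by exists x, a, b.
Qed.

Lemma cnt_tot (c : bool) w : count_mem c w + count_mem (~~c) w = size w.
Proof.
elim: w => //= x w IH.
by case: (x); case: (c) IH => /=; lia.
Qed.

Lemma le_Mnp p w n : size w = n -> occ p w <= Mnp n p.
Proof.
move=> h.
have sz : size w == n by rewrite h.
rewrite /Mnp. exact: (@leq_bigmax _ (fun t : n.-tuple bool => occ p t) (Tuple sz)).
Qed.

Theorem mainTheorem9 (p : seq bool) :
  runs p = 2 ->
  forall (n : nat), size p <= n ->
  forall (w : seq bool), size w = n -> p_optimal p w -> runs w = 2.
Proof.
move=> /runs2 [c [a [b [ha hb ->]]]] n hn w hw.
rewrite /p_optimal occE hw => opt.
have tot := cnt_tot c w.
set z := count_mem c w in tot *; set o := count_mem (~~c) w in tot *.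
have L1 : 'C(z, a) * 'C(o, b) <= f (nseq a c ++ nseq b (~~ c)) w.
  rewrite opt -(f_sorted c a b z o) -occE; apply: le_Mnp.
  by rewrite size_cat !size_nseq tot.
have L2 : 'C(a, a) * 'C(n - a, b) <= f (nseq a c ++ nseq b (~~ c)) w.
  rewrite opt -(f_sorted c a b a (n - a)) -occE; apply: le_Mnp.
  rewrite size_cat !size_nseq; move: hn; rewrite size_cat !size_nseq; lia.
have hs : size (nseq a c ++ nseq b (~~ c)) = a + b by rewrite size_cat !size_nseq.
have P : 0 < 'C(a, a) * 'C(n - a, b).
  rewrite muln_gt0 !bin_gt0 leqnn /=; lia.
have U := f_bound c a b w.
have E : f (nseq a c ++ nseq b (~~ c)) w = 'C(z, a) * 'C(o, b).
  by apply/eqP; rewrite eqn_leq U L1.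
have Q : 0 < 'C(z, a) * 'C(o, b) by rewrite -E; exact: leq_trans P L2.
move: Q; rewrite muln_gt0 !bin_gt0 => /andP [hz ho].
rewrite (f_eq ha hb hz ho E).
apply: runs_sorted; lia.
Qed.
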